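(* Let $(u_1,v_1),(u_2,v_2)\in\mathbb{R}^2$ and let $d>\sqrt{(u_1-u_2)^2+(v_1-v_2)^2}$. Define the $2\times2$ symmetric matrix $$M(x,y)=\bigl(d^2+(u_1-u_2)(2x-u_1-u_2)+(v_1-v_2)(2y-v_1-v_2)\bigr)I_2+2d\begin{bmatrix}x-u_2 & y-v_2\\ y-v_2 & -x+u_2\end{bmatrix}.$$ Then $\det M(x,y)=\prod_{\epsilon_1,\epsilon_2\in\{\pm1\}}\bigl(d+\epsilon_1 r_1+\epsilon_2 r_2\bigr)$ where $r_i=\sqrt{(x-u_i)^2+(y-v_i)^2}$, and $$\{(x,y)\in\mathbb{R}^2: M(x,y)\succeq0\}=\{(x,y)\in\mathbb{R}^2: r_1+r_2\le d\}.$$ *)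

(* Defs.v *)
From HB Require Import structures.
From mathcomp Require Import all_boot all_order all_algebra.
From mathcomp Require Import reals.
Set Implicit Arguments. Unset Strict Implicit. Unset Printing Implicit Defensive.
Import Order.TTheory GRing.Theory Num.Theory.
Local Open Scope ring_scope.

Definition psd_mx (R : realType) (n : nat) (A : 'M[R]_n) : Prop :=
  A^T = A /\ forall v : 'cV[R]_n, 0 <= (v^T *m A *m v) 0 0.

Definition Mxy (R : realType) (u1 v1 u2 v2 d x y : R) : 'M[R]_2 :=
  (d ^+ 2 + (u1 - u2) * (2 * x - u1 - u2) + (v1 - v2) * (2 * y - v1 - v2))%:M
  + (2 * d) *: \matrix_(i < 2, j < 2)
      (if (i == 0) && (j == 0) then x - u2
       else if (i == 1) && (j == 1) then - x + u2
       else y - v2).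

Definition dist2 (R : realType) (x y u v : R) : R :=
  Num.sqrt ((x - u) ^+ 2 + (y - v) ^+ 2).

(* Main.v *)
Require Import Defs.
From HB Require Import structures.
From mathcomp Require Import all_boot all_order all_algebra.
From mathcomp Require Import reals.
From mathcomp Require Import ring lra.
Import Order.TTheory GRing.Theory Num.Theory.
Local Open Scope ring_scope.
Lemma det2 (R : comPzRingType) (A : 'M[R]_2) : \det A = A 0 0 * A 1 1 - A 0 1 * A 1 0.
Proof.
rewrite (expand_det_row _ ord0) !big_ord_recl big_ord0 /cofactor !det_mx11 !mxE /=.
rewrite !expr0 !expr1 mul1r addr0 mulN1r.
have E1 : lift ord0 (0 : 'I_1) = 1 :> 'I_2 by apply/val_inj.
have E2 : lift (lift ord0 ord0) (0 : 'I_1) = 0 :> 'I_2 by apply/val_inj.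
have E3 : lift ord0 ord0 = 1 :> 'I_2 by apply/val_inj.
rewrite ?E2 ?E1 ?E3 mulrN. done.
Qed.
Lemma sq_le (R : realFieldType) (s t : R) : 0 <= t -> s ^+ 2 <= t ^+ 2 -> s <= t.
Proof. move=> t0 h. nra. Qed.

Lemma tri (R : realFieldType) (a b p q r1 D r2 : R) : 0 <= r1 -> 0 <= D -> 0 <= r2 ->
  r1 ^+ 2 = p ^+ 2 + q ^+ 2 -> D ^+ 2 = a ^+ 2 + b ^+ 2 ->
  r2 ^+ 2 = (p + a) ^+ 2 + (q + b) ^+ 2 -> r2 <= r1 + D.
Proof.
move=> h1 h2 h3 e1 e2 e3.
have h : (a * p + b * q) ^+ 2 <= (D * r1) ^+ 2.
  rewrite exprMn e1 e2.
  have : 0 <= (a * q - b * p) ^+ 2 by apply: sqr_ge0.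
  lra.
have h' : a * p + b * q <= D * r1 by apply: sq_le => //; nra.
apply: sq_le; first nra.
rewrite e3; nra.
Qed.
Lemma qfpos (R : realFieldType) (X Y p q r2 c d : R) : 0 <= r2 -> 0 <= d ->
  r2 ^+ 2 = X ^+ 2 + Y ^+ 2 -> 0 <= c - 2 * d * r2 ->
  0 <= c * (p^+2 + q^+2) + 2 * d * (X * (p^+2 - q^+2) + 2 * Y * p * q).
Proof.
move=> h0 d0 e h.
set S := X * (p^+2 - q^+2) + 2 * Y * p * q.
set T := p^+2 + q^+2.
have T0 : 0 <= T by rewrite /T; nra.
have hS : S ^+ 2 <= (r2 * T) ^+ 2.
  rewrite exprMn e /S /T.
  have : 0 <= (X * (2 * p * q) - Y * (p^+2 - q^+2)) ^+ 2 by apply: sqr_ge0.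
  nra.
have hS2 : - S <= r2 * T.
  apply: sq_le; first by nra.
  by rewrite sqrrN.
nra.
Qed.
Lemma qf2 (R : comPzRingType) (A : 'M[R]_2) (v : 'cV[R]_2) :
  (v^T *m A *m v) 0 0 = v 0 0 * (v 0 0 * A 0 0 + v 1 0 * A 1 0) + v 1 0 * (v 0 0 * A 0 1 + v 1 0 * A 1 1).
Proof.
rewrite !mxE !big_ord_recl !big_ord0 !mxE !big_ord_recl !big_ord0 !mxE.
have E1 : lift ord0 (0 : 'I_1) = 1 :> 'I_2 by apply/val_inj.
rewrite !E1 !addr0. ring.
Qed.
Lemma ord2P (i : 'I_2) : i = 0 \/ i = 1.
Proof. case: i => [[|[|n]] Hn]; [left|right|] ; try by apply/val_inj. by []. Qed.
Lemma Mxy_E (R : realType) (u1 v1 u2 v2 d x y : R) :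
  let c := d ^+ 2 + (u1 - u2) * (2 * x - u1 - u2) + (v1 - v2) * (2 * y - v1 - v2) in
  [/\ Mxy u1 v1 u2 v2 d x y 0 0 = c + 2 * d * (x - u2),
      Mxy u1 v1 u2 v2 d x y 1 1 = c - 2 * d * (x - u2),
      Mxy u1 v1 u2 v2 d x y 0 1 = 2 * d * (y - v2) &
      Mxy u1 v1 u2 v2 d x y 1 0 = 2 * d * (y - v2)].
Proof.
move=> c; rewrite /Mxy !mxE /=; split; rewrite ?mulr1n ?mulr0n ?add0r //.
rewrite /c; ring.
Qed.

Theorem mainTheorem5 (R : realType) (u1 v1 u2 v2 d : R) :
  dist2 u1 v1 u2 v2 < d ->
  (forall x y : R,
     \det (Mxy u1 v1 u2 v2 d x y) =
     \prod_(e1 <- [:: 1; -1]) \prod_(e2 <- [:: 1; -1])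
        (d + e1 * dist2 x y u1 v1 + e2 * dist2 x y u2 v2))
  /\
  (forall x y : R,
     psd_mx (Mxy u1 v1 u2 v2 d x y) <-> dist2 x y u1 v1 + dist2 x y u2 v2 <= d).
Proof.
move=> hD.
have D0 : 0 <= dist2 u1 v1 u2 v2 by apply: sqrtr_ge0.
have d0 : 0 < d by apply: le_lt_trans hD.
have Dsq : dist2 u1 v1 u2 v2 ^+ 2 = (u1 - u2) ^+ 2 + (v1 - v2) ^+ 2.
  by rewrite sqr_sqrtr // addr_ge0 // sqr_ge0.
have key : forall x y, let r1 := dist2 x y u1 v1 in let r2 := dist2 x y u2 v2 in
  [/\ 0 <= r1, 0 <= r2, r1 ^+ 2 = (x - u1) ^+ 2 + (y - v1) ^+ 2,
      r2 ^+ 2 = (x - u2) ^+ 2 + (y - v2) ^+ 2 &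
      d ^+ 2 + (u1 - u2) * (2 * x - u1 - u2) + (v1 - v2) * (2 * y - v1 - v2)
       = d ^+ 2 + r2 ^+ 2 - r1 ^+ 2].
  move=> x y r1 r2.
  have e1 : r1 ^+ 2 = (x - u1) ^+ 2 + (y - v1) ^+ 2.
    by rewrite sqr_sqrtr // addr_ge0 // sqr_ge0.
  have e2 : r2 ^+ 2 = (x - u2) ^+ 2 + (y - v2) ^+ 2.
    by rewrite sqr_sqrtr // addr_ge0 // sqr_ge0.
  split => //; try exact: sqrtr_ge0.
  rewrite e1 e2; ring.
split.
  move=> x y.
  have [r10 r20 e1 e2 ec] := key x y.
  have [E00 E11 E01 E10] := Mxy_E _ u1 v1 u2 v2 d x y.
  rewrite det2 E00 E11 E01 E10 ec.
  rewrite !big_cons !big_nil !mulr1.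
  set r1 := dist2 x y u1 v1 in r10 e1 ec *.
  set r2 := dist2 x y u2 v2 in r20 e2 ec *. clearbody r1 r2.
  have -> : (d ^+ 2 + r2 ^+ 2 - r1 ^+ 2 + 2 * d * (x - u2)) *
    (d ^+ 2 + r2 ^+ 2 - r1 ^+ 2 - 2 * d * (x - u2)) - 2 * d * (y - v2) * (2 * d * (y - v2))
    = (d ^+ 2 + r2 ^+ 2 - r1 ^+ 2) ^+ 2 - 4 * d ^+ 2 * r2 ^+ 2.
    rewrite e2; ring.
  ring.
move=> x y.
have [r10 r20 e1 e2 ec] := key x y.
have [E00 E11 E01 E10] := Mxy_E _ u1 v1 u2 v2 d x y.
set M := Mxy u1 v1 u2 v2 d x y in E00 E11 E01 E10 *.
rewrite ec in E00 E11.
set r1 := dist2 x y u1 v1 in r10 e1 ec E00 E11 *.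
set r2 := dist2 x y u2 v2 in r20 e2 ec E00 E11 *.
set c := d ^+ 2 + r2 ^+ 2 - r1 ^+ 2 in E00 E11.
have eK : c - 2 * d * r2 = (d - r2 - r1) * (d - r2 + r1) by rewrite /c; ring.
clearbody M c r1 r2.
split.
  case=> _ hq.
  have hK : 0 <= c - 2 * d * r2.
    have [r2z|r2p] := eqVneq r2 0.
      have := hq (\col_i (if i == 0 then 1 else 0)).
      rewrite qf2 E00 E01 E10 E11 !mxE /= r2z mulr0 subr0.
      have hX : x - u2 = 0.
        move: e2; rewrite r2z expr0n /= => e2.
        have h : (x - u2) ^+ 2 = 0.
          have := sqr_ge0 (x - u2); have := sqr_ge0 (y - v2); lra.
        by apply/eqP; rewrite -sqrf_eq0 h.
      rewrite hX. lra.
    have h1 := hq (\col_i (if i == 0 then y - v2 else - (x - u2) - r2)).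
    have h2 := hq (\col_i (if i == 0 then x - u2 - r2 else y - v2)).
    move: h1 h2; rewrite !qf2 E00 E01 E10 E11 !mxE /= => h1 h2.
    set X := x - u2 in h1 h2 *. set Y := y - v2 in h1 h2 *.
    have hsum : (Y * (Y * (c + 2 * d * X) + (- X - r2) * (2 * d * Y)) +
        (- X - r2) * (Y * (2 * d * Y) + (- X - r2) * (c - 2 * d * X))) +
        ((X - r2) * ((X - r2) * (c + 2 * d * X) + Y * (2 * d * Y)) +
         Y * ((X - r2) * (2 * d * Y) + Y * (c - 2 * d * X)))
        = c * (2 * (X ^+ 2 + Y ^+ 2) + 2 * r2 ^+ 2) - 8 * d * r2 * (X ^+ 2 + Y ^+ 2).
      ring.
    rewrite -e2 in hsum.
    have hs : 0 <= (c - 2 * d * r2) * (4 * r2 ^+ 2).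
      have -> : (c - 2 * d * r2) * (4 * r2 ^+ 2) =
        c * (2 * r2 ^+ 2 + 2 * r2 ^+ 2) - 8 * d * r2 * r2 ^+ 2 by ring.
      rewrite -hsum; exact: addr_ge0.
    have r2pos : 0 < r2 by rewrite lt_neqAle eq_sym r2p r20.
    have : 0 < 4 * r2 ^+ 2 by nra.
    nra.
  have ht := @tri _ _ _ _ _ _ _ _ r10 D0 r20 e1 Dsq.
  have ht' : r2 <= r1 + dist2 u1 v1 u2 v2.
    apply: ht. rewrite e2. congr (_ + _); congr (_ ^+ 2); ring.
  nra.
move=> hle; split.
  apply/matrixP => i j; rewrite mxE.
  by case: (ord2P i) => ->; case: (ord2P j) => ->; rewrite ?E01 ?E10.
move=> v; rewrite qf2 E00 E01 E10 E11.
have := @qfpos R (x - u2) (y - v2) (v 0 0) (v 1 0) r2 c d r20 (ltW d0) e2.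
have hK : 0 <= c - 2 * d * r2 by rewrite eK; nra.
move=> /(_ hK) h. lra.
Qed.
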